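(* Let $X$ be a $T_1$ topological space. The following are equivalent: (i) $X$ is an $F_cP$-space, i.e. $C_c(X)_F$ is von Neumann regular; (ii) for every $Z\in Z[C_c(X)_F]$ there exists a finite $F\subseteq X$ such that $Z\setminus F$ is clopen in the subspace $X\setminus F$; (iii) $C_c(X)_F$ is a PP-ring, i.e. the annihilator of every element is generated by an idempotent.
   Context: $C_c(X)_F$ denotes the set of all functions $f:X\to\mathbb{R}$ whose range is countable and whose set of points of discontinuity is finite; it is a commutative ring with unity under pointwise operations. $Z(f)=\{x:f(x)=0\}$, $Z[C_c(X)_F]=\{Z(f):f\in C_c(X)_F\}$. A commutative ring $R$ is von Neumann regular if for every $a\in R$ there is $r\in R$ with $a=a^2r$. $\mathrm{Ann}(f)=\{g: gf=0\}$. *)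

(* Defs.v *)
From HB Require Import structures.
From mathcomp Require Import all_boot all_order all_algebra.
From mathcomp Require Import all_classical all_reals all_analysis.
Set Implicit Arguments. Unset Strict Implicit. Unset Printing Implicit Defensive.
Import Order.TTheory GRing.Theory Num.Theory.
Import numFieldNormedType.Exports.
Local Open Scope classical_set_scope.
Local Open Scope ring_scope.

Definition CcF {X : topologicalType} {R : realType} : set (X -> R) :=
  [set f : X -> R | countable (range f) /\
           finite_set [set x : X | ~ {for x, continuous f}]].

Definition zeroset {X : Type} {R : realType} (f : X -> R) : set X :=
  [set x | f x = 0].

Definition AnnCcF {X : topologicalType} {R : realType} (f : X -> R)
  : set (X -> R) :=
  [set g | CcF g /\ (fun x => g x * f x) = (fun=> 0)].

Definition CcF_vN_regular (X : topologicalType) (R : realType) : Prop :=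
  forall a : X -> R, CcF a ->
    exists r : X -> R, CcF r /\ a = (fun x => a x ^+ 2 * r x).

Definition CcF_PP (X : topologicalType) (R : realType) : Prop :=
  forall f : X -> R, CcF f ->
    exists e : X -> R, [/\ CcF e, (fun x => e x * e x) = e &
      AnnCcF f = [set (fun x => g x * e x) | g in (@CcF X R)]].

(* A `\` F is clopen in the subspace X `\` F (subspace topology written
   out: relatively open and relatively closed). *)
Definition rel_clopen {X : topologicalType} (S A : set X) : Prop :=
  (exists U : set X, open U /\ S = U `&` A) /\
  (exists C : set X, closed C /\ S = C `&` A).

(* Main.v *)
Require Import Defs.
From HB Require Import structures.
From mathcomp Require Import all_boot all_order all_algebra.
From mathcomp Require Import all_classical all_reals all_analysis.
Import Order.TTheory GRing.Theory Num.Theory.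
Import numFieldNormedType.Exports.
Local Open Scope classical_set_scope.
Local Open Scope ring_scope.
Set Implicit Arguments. Unset Strict Implicit.

Section H.
Context (R : realType) (X : topologicalType).

Lemma cnt_map2 (h : R -> R -> R) (f g : X -> R) :
  countable (range f) -> countable (range g) ->
  countable (range (fun x => h (f x) (g x))).
Proof.
move=> cf cg.
apply: (sub_countable _ (countableX cf cg)).
have sub : range (fun x => h (f x) (g x)) `<=`
   [set (fun p : R * R => h p.1 p.2) p | p in range f `*` range g].
  by move=> _ [x _ <-]; exists (f x, g x) => //; split; exists x.
exact: card_le_trans (subset_card_le sub) (card_image_le _ _).
Qed.

Lemma CcF_map2 (h : R -> R -> R) (f g : X -> R) :
  (forall x : X, {for x, continuous f} -> {for x, continuous g} ->
     {for x, continuous (fun y => h (f y) (g y))}) ->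
  CcF f -> CcF g -> CcF (fun x => h (f x) (g x)).
Proof.
move=> H [cf ff] [cg fg]; split; first exact: cnt_map2.
have fU := ff; have fU' := fg.
apply: (@sub_finite_set _ _ (
  [set x : X | ~ {for x, continuous f}] `|` [set x : X | ~ {for x, continuous g}])).
  2: by rewrite finite_setU.
move=> x /= nc.
case: (pselect ({for x, continuous f})) => c1; last by left.
case: (pselect ({for x, continuous g})) => c2; last by right.
by exfalso; apply: nc; apply: H.
Qed.

Lemma CcF_mul (f g : X -> R) : CcF f -> CcF g -> CcF (fun x => f x * g x).
Proof.
apply: (@CcF_map2 (fun a b => a * b)) => x c1 c2; exact: cvgM.
Qed.

Lemma CcF_sub (f g : X -> R) : CcF f -> CcF g -> CcF (fun x => f x - g x).
Proof.
apply: (@CcF_map2 (fun a b => a - b)) => x c1 c2; exact: cvgB.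
Qed.

Lemma CcF_cst (c : R) : CcF (fun _ : X => c).
Proof.
split.
  apply: finite_set_countable.
  apply: (@sub_finite_set _ _ [set c]); last exact: finite_set1.
  by move=> _ [x _ <-].
apply: (@sub_finite_set _ _ set0); last exact: finite_set0.
by move=> x /= nc; apply: nc; apply: cvg_cst.
Qed.


Lemma clopen_lem (S F : set X) :
  (forall x, ~ F x -> S x -> nbhs x S) ->
  (forall x, ~ F x -> ~ S x -> nbhs x (~` S)) ->
  rel_clopen (S `\` F) (~` F).
Proof.
move=> H1 H2; split.
  exists S°; split; first exact: open_interior.
  apply/seteqP; split => y.
    by move=> [Sy nFy]; split => //; exact: H1.
  by move=> [iy nFy]; split => //; exact: nbhs_singleton iy.
exists (~` (~` S)°); split; first exact/open_closedC/open_interior.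
apply/seteqP; split => y.
  move=> [Sy nFy]; split => //= iy.
  by have := nbhs_singleton iy; apply.
move=> [niy nFy]; split => //.
apply: contrapT => nSy; apply: niy; exact: H2.
Qed.

Lemma ii_i : (forall f : X -> R, CcF f ->
          exists F : set X, finite_set F /\
            rel_clopen (zeroset f `\` F) (~` F)) ->
  accessible_space X -> CcF_vN_regular X R.
Proof.
move=> H hT1 a Ca.
have [F [fF [[U [oU EU]] _]]] := H a Ca.
exists (fun x => (a x)^-1); split.
  case: Ca => ca fa; split.
    by apply: (@cnt_map2 (fun u _ => u^-1) a a).
  apply: (@sub_finite_set _ _ ([set x : X | ~ {for x, continuous a}] `|` F)).
    2: by rewrite finite_setU.
  move=> x /= nc.
  case: (pselect ({for x, continuous a})) => c1; last by left.
  case: (pselect (F x)) => c2; first by right.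
  exfalso; apply: nc.
  have [a0|an0] := eqVneq (a x) 0.
    have Ux : (U `&` ~` F) x.
      by rewrite -EU; split.
    have nb : nbhs x (U `&` ~` F).
      apply: open_nbhs_nbhs; split => //.
      apply: openI => //; apply: closed_openC.
      by move/accessible_finite_set_closed : hT1; apply.
    apply: cvg_near_cst.
    apply: filterS nb => y; rewrite -EU => -[zy _].
    by move: zy; rewrite /zeroset /= => ->; rewrite a0 invr0.
  exact: cvgV.
apply/funext => x.
have [a0|an0] := eqVneq (a x) 0; first by rewrite a0 expr2 !mul0r.
by rewrite expr2 mulfK.
Qed.


Lemma i_iii : CcF_vN_regular X R -> CcF_PP X R.
Proof.
move=> H f Cf.
have [r [Cr Er]] := H f Cf.
have Ex x : f x = f x ^+ 2 * r x by rewrite {1}Er.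
have Cfr := CcF_mul Cf Cr.
have Ce : CcF (fun x => 1 - f x * r x) := CcF_sub (CcF_cst 1) Cfr.
have idem x : f x * r x * (f x * r x) = f x * r x.
  by rewrite mulrA -(mulrA (f x)) (mulrC (r x)) mulrA -expr2 -Ex.
have ef x : (1 - f x * r x) * f x = 0.
  by rewrite mulrBl mul1r -mulrA (mulrC (r x)) mulrA -expr2 -Ex subrr.
exists (fun x => 1 - f x * r x); split => //.
  apply/funext => x.
  by rewrite mulrBl mul1r mulrBr mulr1 idem subrr subr0.
apply/seteqP; split.
  move=> g [Cg gf]; exists g => //.
  apply/funext => x.
  have gx : g x * f x = 0 by have := congr1 (fun h => h x) gf.
  by rewrite mulrBr mulr1 mulrA gx mul0r subr0.
move=> _ [g Cg <-]; split; first exact: CcF_mul.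
by apply/funext => x; rewrite -mulrA ef mulr0.
Qed.


Lemma iii_ii : accessible_space X -> CcF_PP X R ->
  (forall f : X -> R, CcF f ->
          exists F : set X, finite_set F /\
            rel_clopen (zeroset f `\` F) (~` F)).
Proof.
move=> hT1 H f Cf.
have [e [Ce ee EA]] := H f Cf.
have eex x : e x * e x = e x by have := congr1 (fun h => h x) ee.
have e01 x : e x != 0 -> e x = 1.
  by move=> nz; apply: (mulfI nz); rewrite eex mulr1.
have Ae : AnnCcF f e.
  rewrite EA; exists (fun _ => 1); first exact: CcF_cst.
  by apply/funext => x; rewrite mul1r.
have ef x : e x * f x = 0 by have := congr1 (fun h => h x) (proj2 Ae).
have Z1 x : f x = 0 -> e x = 1.
  move=> fx0.
  pose d := fun y : X => ((y \in [set x]) : nat)%:R : R.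
  have Cd : CcF d.
    split.
      apply: finite_set_countable.
      apply: (@sub_finite_set _ _ [set (0:R); 1]); last exact: finite_set2.
      move=> _ [y _ <-]; rewrite /d; case: (y \in [set x]) => /=.
        by right.
      by left.
    apply: (@sub_finite_set _ _ [set x]); last exact: finite_set1.
    move=> y /= nc; apply: contrapT => yx; apply: nc.
    have nb : nbhs y (~` [set x]).
      apply: open_nbhs_nbhs; split => //.
      by apply: closed_openC; apply: accessible_closed_set1.
    apply: cvg_near_cst.
    apply: filterS nb => z /= zx.
    by rewrite /d !memNset // => ->.
  have Ad : AnnCcF f d.
    split => //; apply/funext => y; rewrite /d.
    case: (boolP (y \in [set x])) => [/set_mem -> | _]; first by rewrite fx0 mulr0.
    by rewrite mul0r.
  move: Ad; rewrite EA => -[g _ gd].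
  have := congr1 (fun h => h x) gd; rewrite /d mem_set //= => gx.
  apply: e01; apply/eqP => e0; move: gx; rewrite e0 mulr0.
  by move/eqP; rewrite eq_sym oner_eq0.
have Zs x : zeroset f x <-> e x = 1.
  split; first exact: Z1.
  move=> e1; have := ef x; rewrite e1 mul1r; done.
exists [set x : X | ~ {for x, continuous e}]; split; first by case: Ce.
apply: clopen_lem.
  move=> x /= cx; move/contrapT: cx => cx /Zs ex1.
  have nb : \forall y \near x, e y != 0.
    by apply: (cvgr_neq0 (e x) cx); rewrite ex1 oner_neq0.
  apply: filterS nb => y /= ey; apply/Zs; exact: e01.
move=> x /= cx; move/contrapT: cx => cx nZx.
have ex0 : e x = 0.
  apply: contrapT => /eqP nz; apply: nZx; apply/Zs; exact: e01.
have cB : (fun y => e y - 1) @ x --> e x - 1 by apply: cvgB => //; apply: cvg_cst.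
have nb : \forall y \near x, e y - 1 != 0.
  by apply: (cvgr_neq0 (e x - 1) cB); rewrite ex0 sub0r oppr_eq0 oner_neq0.
apply: filterS nb => y /= ey /Zs ey1; move: ey; rewrite ey1 subrr eqxx.
done.
Qed.

End H.

Unset Implicit Arguments.
Theorem theorem7p6 (R : realType) (X : topologicalType)
  (hT1 : @accessible_space X) :
  [/\ (CcF_vN_regular X R <->
       (forall f : X -> R, CcF f ->
          exists F : set X, finite_set F /\
            rel_clopen (zeroset f `\` F) (~` F))),
      ((forall f : X -> R, CcF f ->
          exists F : set X, finite_set F /\
            rel_clopen (zeroset f `\` F) (~` F)) <-> CcF_PP X R) &
      (CcF_PP X R <-> CcF_vN_regular X R)].
Proof.
have h2i := @ii_i R X.
have hi3 := @i_iii R X.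
have h32 := @iii_ii R X hT1.
split; split => H.
- exact: iii_ii (hi3 H).
- exact: h2i H hT1.
- exact: hi3 (h2i H hT1).
- exact: h32 H.
- exact: h2i (h32 H) hT1.
- exact: hi3 H.
Qed.
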